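(* Let $p$ be an odd prime, let $h_1,h_2$ be relatively prime positive integers, both different from $1$, such that $h=h_1+h_2$ is odd. Let $\mathcal{D}(x_1,x_2)=(px_1+x_2^{p^{h_1}},\ px_2+x_1^{p^{h_2}})$, and let $(\xi_1,\eta_1)\in\overline{\mathbb{Q}}_p^{\,2}$ be a non-zero $p$-torsion point of $\mathcal D$, i.e. $(\xi_1,\eta_1)\ne(0,0)$ and $\mathcal{D}(\xi_1,\eta_1)=(0,0)$. Let $U_h$ be the unramified extension of degree $h$ of $\mathbb{Q}_p$ in $\overline{\mathbb{Q}}_p$. Then: (1) $U_h(\xi_1)=U_h(\eta_1)$; (2) the extension $U_h(\xi_1)/U_h$ is totally ramified of degree $\frac{p^h-1}{2}$.
   Context: $\mathcal D$ is a simple approximation of the multiplication-by-$p$ endomorphism of the 2-dimensional Lubin–Tate formal group over $\mathbb{Z}_p$ associated with $(h_1,h_2)$. *)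

(* Defs.v *)
From HB Require Import structures.
From mathcomp Require Import all_boot all_order all_algebra.
From mathcomp Require Import reals.
Set Implicit Arguments. Unset Strict Implicit. Unset Printing Implicit Defensive.
Import Order.TTheory GRing.Theory Num.Theory.
Local Open Scope ring_scope.

Definition is_subfield (C : fieldType) (S : C -> Prop) : Prop :=
  [/\ S 0, S 1, (forall x y, S x -> S y -> S (x - y)),
      (forall x y, S x -> S y -> S (x * y)) & (forall x, S x -> S x^-1)].

Definition gen_field (C : fieldType) (E : C -> Prop) (a : C) : C -> Prop :=
  fun x => forall S : C -> Prop, is_subfield S -> (forall y, E y -> S y) -> S a -> S x.

Definition ext_degree (C : fieldType) (E F : C -> Prop) (n : nat) : Prop :=
  exists b : 'I_n -> C,
    [/\ (forall i, F (b i)),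
        (forall x, F x -> exists c : 'I_n -> C,
                   (forall i, E (c i)) /\ x = \sum_(i < n) c i * b i) &
        (forall c : 'I_n -> C, (forall i, E (c i)) ->
                   \sum_(i < n) c i * b i = 0 -> forall i, c i = 0)].

Definition nonarch_absval (R : realType) (C : fieldType) (absv : C -> R) : Prop :=
  [/\ (forall x, 0 <= absv x), (forall x, absv x = 0 <-> x = 0),
      (forall x y, absv (x * y) = absv x * absv y) &
      (forall x y, absv (x + y) <= Num.max (absv x) (absv y))].

(* ramification index e(F/E) = n : the value group |F^x| contains |E^x|
   with index n (n representatives b_i). *)
Definition ram_index (R : realType) (C : fieldType) (absv : C -> R)
    (E F : C -> Prop) (n : nat) : Prop :=
  exists b : 'I_n -> C,
    [/\ (forall i, F (b i) /\ b i != 0),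
        (forall x, F x -> x != 0 ->
           exists i a, [/\ E a, a != 0 & absv x = absv (b i) * absv a]) &
        (forall i j a, E a -> a != 0 -> absv (b i) = absv (b j) * absv a -> i = j)].

Definition totally_ramified_of_degree (R : realType) (C : fieldType) (absv : C -> R)
    (E F : C -> Prop) (d : nat) : Prop :=
  ext_degree E F d /\ ram_index absv E F d.

Definition unramified_of_degree (R : realType) (C : fieldType) (absv : C -> R)
    (E F : C -> Prop) (d : nat) : Prop :=
  ext_degree E F d /\ ram_index absv E F 1.

(* Topological closure of Q in C: this is Q_p inside Qbar_p. *)
Definition Qclosure (R : realType) (C : fieldType) (absv : C -> R) : C -> Prop :=
  fun x => forall eps : R, 0 < eps -> exists q : rat, absv (x - ratr q) < eps.

Definition complete_on (R : realType) (C : fieldType) (absv : C -> R) (K : C -> Prop) :=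
  forall u : nat -> C, (forall n, K (u n)) ->
    (forall eps : R, 0 < eps -> exists N, forall m n, (N <= m)%N -> (N <= n)%N ->
        absv (u m - u n) < eps) ->
    exists l : C, forall eps : R, 0 < eps -> exists N, forall n, (N <= n)%N ->
        absv (u n - l) < eps.

Definition algebraic_over (C : fieldType) (K : C -> Prop) : Prop :=
  forall x : C, exists q : {poly C}, [/\ q != 0, (forall i, K q`_i) & root q x].

(* (C, absv) is a model of Qbar_p with its p-adic absolute value, normalised
   |p| = 1/p: C algebraically closed of characteristic 0, absv non-archimedean,
   the closure Qclosure of Q in C (= Q_p) complete, and C algebraic over it. *)
Definition Qpbar_model (R : realType) (C : closedFieldType) (absv : C -> R) (p : nat) :=
  [/\ [pchar C] =i pred0, nonarch_absval absv, absv p%:R = (p%:R)^-1,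
      complete_on absv (Qclosure absv) & algebraic_over (Qclosure absv)].

(* Main.v *)
Require Import Defs.
From HB Require Import structures.
From mathcomp Require Import all_boot all_order all_algebra.
From mathcomp Require Import reals.
From mathcomp Require Import zify ring lra.
From mathcomp Require boolp.
Set Implicit Arguments. Unset Strict Implicit. Unset Printing Implicit Defensive.
Import Order.TTheory GRing.Theory Num.Theory.

Lemma pow_gcd_mod (G p a b : nat) : p ^ a = 1 %[mod G] -> p ^ b = 1 %[mod G] ->
  p ^ (gcdn a b) = 1 %[mod G].
Proof.
case: a => [|a] Ha Hb; first by rewrite gcd0n.
have [u _ dv] := Bezoutl b (ltn0Sn a).
have e1 : p ^ (gcdn a.+1 b + u * b) = 1 %[mod G].
  rewrite -(divnK dv) mulnC expnM -modnXm Ha modnXm exp1n //.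
rewrite expnD [u * b]mulnC expnM -modnMmr -modnXm Hb modnXm exp1n modnMmr muln1 in e1.
exact: e1.
Qed.

Lemma arith_coprime (p h1 h2 : nat) : prime p -> odd p -> coprime h1 h2 -> odd (h1 + h2) ->
  coprime ((p ^ (h1 + h2)).-1 %/ 2) ((p ^ h1 + 1) %/ 2).
Proof.
move=> pp op cop oh.
have p0 : 0 < p by apply: prime_gt0.
have oph : odd (p ^ (h1 + h2)) by rewrite oddX op orbT.
have oph1 : odd (p ^ h1) by rewrite oddX op orbT.
have pos : 0 < p ^ (h1 + h2) by rewrite expn_gt0 p0.
have e1 : (p ^ (h1 + h2)).-1 = 2 * ((p ^ (h1 + h2)).-1 %/ 2).
  rewrite mulnC divnK //; move: oph pos; case: (p ^ (h1 + h2)) => // n /=.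
  by move=> on _; rewrite dvdn2.
have e2 : p ^ h1 + 1 = 2 * ((p ^ h1 + 1) %/ 2).
  by rewrite mulnC divnK // dvdn2 addn1 /= oph1.
set N := (p ^ (h1 + h2)).-1 %/ 2 in e1 *; set M := (p ^ h1 + 1) %/ 2 in e2 *.
set G := gcdn (p ^ (h1 + h2)).-1 (p ^ h1 + 1).
have G0 : 0 < G by rewrite gcdn_gt0 addn1 orbT.
have dG : G %| 2.
  have Hh : p ^ (h1 + h2) = 1 %[mod G].
    apply/eqP; rewrite eqn_mod_dvd // subn1; exact: dvdn_gcdl.
  have H2 : p ^ (2 * h1) = 1 %[mod G].
    apply/eqP; rewrite eqn_mod_dvd ?expn_gt0 ?p0 // mulnC expnM.
    rewrite -{2}(exp1n 2) subn_sqr; apply: dvdn_mull; exact: dvdn_gcdr.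
  have cg : gcdn (h1 + h2) (2 * h1) = 1.
    apply/eqP; rewrite -/(coprime _ _) coprimeMr coprimen2 oh /=.
    by rewrite coprime_sym /coprime; have := gcdnMDl 1 h1 h2; rewrite mul1n => ->.
  have Hp := pow_gcd_mod Hh H2; rewrite cg expn1 in Hp.
  have Hp1 : p ^ h1 + 1 = 2 %[mod G] by rewrite -modnDml -modnXm Hp modnXm exp1n modnDml.
  have : (p ^ h1 + 1) %% G = 0 by apply/eqP; rewrite -/(dvdn _ _); exact: dvdn_gcdr.
  by rewrite Hp1 => /eqP.
move: dG; rewrite /G e1 e2 -muln_gcdr.
rewrite -{2}(muln1 2) dvdn_pmul2l // dvdn1; exact.
Qed.

Local Open Scope ring_scope.

Definition Ub (C : fieldType) (U : C -> Prop) : pred C := fun x => boolp.asbool (is_subfield U -> U x).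

Lemma Ub_divring (C : fieldType) (U : C -> Prop) : divring_closed (Ub U).
Proof.
split.
- by apply/boolp.asboolP => [[]].
- move=> x y /boolp.asboolP Hx /boolp.asboolP Hy; apply/boolp.asboolP => HU.
  by case: (HU) => _ _ Hs _ _; apply: Hs; [apply: Hx| apply: Hy].
- move=> x y /boolp.asboolP Hx /boolp.asboolP Hy; apply/boolp.asboolP => HU.
  by case: (HU) => _ _ _ Hm Hi; apply: Hm; [apply: Hx| apply: Hi; apply: Hy].
Qed.

HB.instance Definition _ (C : fieldType) (U : C -> Prop) :=
  GRing.isDivringClosed.Build C (Ub U) (Ub_divring U).

Notation Kt U := {x : _ | Ub U x}.
HB.instance Definition _ (C : fieldType) (U : C -> Prop) := [SubChoice_isSubComUnitRing of Kt U by <:].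
HB.instance Definition _ (C : fieldType) (U : C -> Prop) := [SubComUnitRing_isSubIntegralDomain of Kt U by <:].
HB.instance Definition _ (C : fieldType) (U : C -> Prop) := [SubIntegralDomain_isSubField of Kt U by <:].


Lemma Ub_in (C : fieldType) (U : C -> Prop) x : U x -> Ub U x.
Proof. by move=> Ux; apply/boolp.asboolP. Qed.

Lemma Ub_out (C : fieldType) (U : C -> Prop) x : is_subfield U -> Ub U x -> U x.
Proof. by move=> HU /boolp.asboolP; apply. Qed.

Lemma dep_lemma (C : fieldType) (U : C -> Prop) (HU : is_subfield U) n
  (w : 'I_n.+1 -> 'I_n -> C) : (forall j k, U (w j k)) ->
  exists c : 'I_n.+1 -> C, [/\ (forall j, U (c j)), (exists j, c j != 0) &
     forall k, \sum_j c j * w j k = 0].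
Proof.
move=> Hw.
pose W : 'M[Kt U]_(n.+1, n) := \matrix_(j, k) (Sub (w j k) (Ub_in (Hw j k)) : Kt U).
have rk : (0 < \rank (kermx W))%N.
  rewrite mxrank_ker; have := rank_leq_col W; lia.
have [i Hi] : exists i, row i (kermx W) != 0.
  apply/existsP; apply: contraLR rk; rewrite negb_exists => /forallP H.
  have -> : kermx W = 0.
    by apply/row_matrixP => i; rewrite row0; apply/eqP; move: (H i); rewrite negbK.
  by rewrite mxrank0.
set y := row i (kermx W) in Hi.
have yW : y *m W = 0 by apply/sub_kermxP; rewrite /y row_sub.
have [j Hj] : exists j, y 0 j != 0.
  apply/existsP; apply: contraLR Hi; rewrite negb_exists => /forallP H.
  rewrite negbK; apply/eqP/matrixP => a b; rewrite ord1 [RHS]mxE; apply/eqP; move: (H b); by rewrite negbK.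
exists (fun j0 : 'I_n.+1 => sval (y 0 j0)).
split.
- by move=> j'; apply: Ub_out => //; exact: (svalP (y 0 j')).
- by exists j; apply: contra Hj => /eqP H; apply/eqP/val_inj.
- move=> k.
  have := congr1 (fun M : 'M[Kt U]_(1, n) => val (M 0 k)) yW.
  rewrite !mxE.
  move=> E; transitivity (val (\sum_j0 y 0 j0 * W j0 k)); last by rewrite E.
  have vs : forall s : seq 'I_n.+1, \sum_(j0 <- s) sval (y 0 j0) * w j0 k = sval (\sum_(j0 <- s) y 0 j0 * W j0 k).
    elim => [|a s IH]; first by rewrite !big_nil.
    by rewrite !big_cons IH /= /W mxE.
  by rewrite vs.
Qed.


Lemma av0 (R : realType) (C : fieldType) (absv : C -> R) :
  nonarch_absval absv -> absv 0 = 0.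
Proof. by case=> _ H _ _; apply/H. Qed.

Lemma av_eq0 (R : realType) (C : fieldType) (absv : C -> R) x :
  nonarch_absval absv -> (absv x == 0) = (x == 0).
Proof. by case=> _ H _ _; apply/eqP/eqP => /H. Qed.

Lemma av1 (R : realType) (C : fieldType) (absv : C -> R) :
  nonarch_absval absv -> absv 1 = 1.
Proof.
move=> Ha; have := Ha => -[_ _ HM _].
have h := HM 1 1; rewrite mulr1 in h.
have n0 : absv 1 != 0 by rewrite av_eq0 // oner_eq0.
by apply: (mulfI n0); rewrite mulr1 -h.
Qed.

Lemma avX (R : realType) (C : fieldType) (absv : C -> R) x n :
  nonarch_absval absv -> absv (x ^+ n) = absv x ^+ n.
Proof.
move=> Ha; have := Ha => -[_ _ HM _].
by elim: n => [|n IH]; rewrite ?expr0 ?av1 // !exprS HM IH.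
Qed.

Lemma avN (R : realType) (C : fieldType) (absv : C -> R) x :
  nonarch_absval absv -> absv (- x) = absv x.
Proof.
move=> Ha; have := Ha => -[H0 _ HM _].
have h1 : absv (-1) = 1.
  have h := HM (-1) (-1); rewrite mulrNN mulr1 av1 // in h.
  have g := H0 (-1).
  have : (absv (-1) - 1) * (absv (-1) + 1) == 0.
    by rewrite mulrDr !mulrBl -h; apply/eqP; ring.
  rewrite mulf_eq0 => /orP [|]; first by rewrite subr_eq0 => /eqP.
  by move=> /eqP hh; exfalso; move: g; lra.
by rewrite -mulN1r HM h1 mul1r.
Qed.

Lemma avV (R : realType) (C : fieldType) (absv : C -> R) x :
  nonarch_absval absv -> x != 0 -> absv (x^-1) = (absv x)^-1.
Proof.
move=> Ha xn0; have := Ha => -[_ _ HM _].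
have h := HM x x^-1; rewrite mulfV // av1 // in h.
have n0 : absv x != 0 by rewrite av_eq0.
by apply: (mulfI n0); rewrite -h mulfV.
Qed.

Lemma av_ult (R : realType) (C : fieldType) (absv : C -> R) x y :
  nonarch_absval absv -> absv x < absv y -> absv (x + y) = absv y.
Proof.
move=> Ha lt; have := Ha => -[_ _ _ HU].
apply/eqP; rewrite eq_le; apply/andP; split.
  by have := HU x y; rewrite (max_idPr (ltW lt)).
have := HU (x + y) (- x); rewrite addrC addKr avN // le_max => /orP [] // h.
by exfalso; move: lt; rewrite ltNge h.
Qed.

Lemma av_nat_le1 (R : realType) (C : fieldType) (absv : C -> R) n :
  nonarch_absval absv -> absv n%:R <= 1.
Proof.
move=> Ha; have := Ha => -[_ _ _ HU].
elim: n => [|n IH]; first by rewrite av0 //.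
rewrite -addn1 natrD; apply: le_trans (HU _ _) _.
by rewrite ge_max IH av1 // lexx.
Qed.

Lemma av_int_le1 (R : realType) (C : fieldType) (absv : C -> R) (z : int) :
  nonarch_absval absv -> absv z%:~R <= 1.
Proof.
move=> Ha; case: z => n; first exact: av_nat_le1.
by rewrite NegzE mulrNz avN // av_nat_le1.
Qed.

Definition pw (R : realType) (p : nat) (r : R) := exists k : int, r = (p%:R : R) ^ k.

Lemma pw1 (R : realType) p : pw p (1 : R).
Proof. by exists 0; rewrite expr0z. Qed.

Lemma pwM (R : realType) p (r s : R) : (0 < p)%N -> pw p r -> pw p s -> pw p (r * s).
Proof.
move=> p0 [a ->] [b ->]; exists (a + b); rewrite expfzDr //.
by rewrite pnatr_eq0 -lt0n.
Qed.

Lemma pwV (R : realType) p (r : R) : pw p r -> pw p r^-1.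
Proof. by move=> [a ->]; exists (- a); rewrite invr_expz. Qed.

Lemma pwXinv (R : realType) p e : pw p (((p%:R : R)^-1) ^+ e).
Proof. by exists (- (e%:Z)); rewrite exprnP exprz_inv. Qed.

Lemma av_coprime (R : realType) (C : fieldType) (absv : C -> R) p m :
  nonarch_absval absv -> absv p%:R = (p%:R)^-1 -> (1 < p)%N ->
  coprime m p -> absv m%:R = 1.
Proof.
move=> Ha Hp p1 cop; have := Ha => -[H0 _ HM HU].
have [u [v E]] := Bezoutz (m%:Z) (p%:Z).
have E1 : u%:~R * m%:R + v%:~R * p%:R = 1 :> C.
  have := congr1 (fun z : int => z%:~R : C) E.
  rewrite /= intrD !intrM /gcdz (eqP cop); exact.
have := HU (u%:~R * m%:R) (v%:~R * p%:R); rewrite E1 av1 // !HM Hp le_max.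
have hu := av_int_le1 u Ha; have hv := av_int_le1 v Ha.
have hm := av_nat_le1 m Ha; have hm0 := H0 m%:R.
have pinv : (p%:R : R)^-1 < 1 by rewrite invf_lt1 ?ltr1n // ltr0n; lia.
have pinv0 : 0 < (p%:R : R)^-1 by rewrite invr_gt0 ltr0n; lia.
have hv0 := H0 v%:~R.
case/orP => h.
  apply/eqP; rewrite eq_le hm /=; apply: le_trans h _.
  by rewrite ler_piMl.
exfalso; have : absv v%:~R * (p%:R : R)^-1 < 1.
  by apply: le_lt_trans pinv; rewrite ler_piMl // ltW.
by rewrite ltNge h.
Qed.

Lemma av_natpos (R : realType) (C : fieldType) (absv : C -> R) p n :
  nonarch_absval absv -> absv p%:R = (p%:R)^-1 -> prime p ->
  (0 < n)%N -> pw p (absv n%:R).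
Proof.
move=> Ha Hp pp n0; have := Ha => -[H0 _ HM HU].
have [m cop ->] := pfactor_coprime pp n0.
rewrite natrM natrX HM avX // Hp (@av_coprime R C absv p m) ?mul1r //.
- exact: pwXinv.
- exact: prime_gt1.
- by rewrite coprime_sym.
Qed.

Lemma av_int (R : realType) (C : fieldType) (absv : C -> R) p (z : int) :
  nonarch_absval absv -> absv p%:R = (p%:R)^-1 -> prime p ->
  z != 0 -> pw p (absv z%:~R).
Proof.
move=> Ha Hp pp; case: z => n nz.
  by apply: av_natpos => //; rewrite lt0n; apply: contra nz => /eqP ->.
by rewrite NegzE mulrNz avN //; apply: av_natpos.
Qed.

Lemma av_rat (R : realType) (C : fieldType) (absv : C -> R) p (q : rat) :
  [pchar C] =i pred0 -> nonarch_absval absv -> absv p%:R = (p%:R)^-1 -> prime p ->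
  q != 0 -> pw p (absv (ratr q : C)).
Proof.
move=> ch Ha Hp pp qn0; have := Ha => -[H0 _ HM HU].
have p0 : (0 < p)%N by apply: prime_gt0.
rewrite /ratr HM; apply: pwM => //; first by apply: av_int => //; rewrite numq_eq0.
have dn0 : (denq q)%:~R != 0 :> C.
  rewrite -(gtz0_abs (denq_gt0 q)); have /pcharf0P -> := ch.
  by rewrite -lt0n absz_gt0 denq_neq0.
rewrite avV //; apply: pwV; apply: av_int => //; exact: denq_neq0.
Qed.

Lemma av_Qcl (R : realType) (C : fieldType) (absv : C -> R) p x :
  [pchar C] =i pred0 -> nonarch_absval absv -> absv p%:R = (p%:R)^-1 -> prime p ->
  Qclosure absv x -> x != 0 -> pw p (absv x).
Proof.
move=> ch Ha Hp pp Hx xn0; have := Ha => -[H0 _ HM HU].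
have pos : 0 < absv x by rewrite lt_def av_eq0 // xn0 H0.
have [q Hq] := Hx _ pos.
have e : absv (ratr q : C) = absv x.
  have := @av_ult R C absv (- (x - ratr q)) x Ha; rewrite avN // => /(_ Hq).
  move=> <-; congr absv; ring.
have qn0 : q != 0.
  apply/eqP => q0; move: e; rewrite q0 (_ : ratr 0 = 0 :> C); last by by rewrite /ratr /= mul0r.
  by rewrite av0 // => e; move: pos; rewrite -e ltxx.
rewrite -e; exact: av_rat.
Qed.

Lemma av_U (R : realType) (C : fieldType) (absv : C -> R) p (U : C -> Prop) a :
  [pchar C] =i pred0 -> nonarch_absval absv -> absv p%:R = (p%:R)^-1 -> prime p ->
  is_subfield U -> ram_index absv (Qclosure absv) U 1 -> U a -> a != 0 -> pw p (absv a).
Proof.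
move=> ch Ha Hp pp HU [b [Hb Hx _]] Ua an0.
have := Ha => -[H0 _ HM _].
have p0 : (0 < p)%N by apply: prime_gt0.
have [i1 [a1 [Q1 n1 E1]]] := Hx 1 (let: And5 _ h _ _ _ := HU in h) (oner_neq0 _).
have [i2 [a2 [Q2 n2 E2]]] := Hx a Ua an0.
rewrite (ord1 i1) in E1; rewrite (ord1 i2) in E2.
have a1n : absv a1 != 0 by rewrite av_eq0.
have eb : absv (b ord0) = (absv a1)^-1.
  by apply: (mulIf a1n); rewrite -E1 av1 // mulVf.
rewrite E2 eb; apply: pwM => //; first apply: pwV; exact: av_Qcl.
Qed.

Lemma sf0 (C : fieldType) (U : C -> Prop) : is_subfield U -> U 0.
Proof. by case. Qed.
Lemma sf1 (C : fieldType) (U : C -> Prop) : is_subfield U -> U 1.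
Proof. by case. Qed.
Lemma sfB (C : fieldType) (U : C -> Prop) x y : is_subfield U -> U x -> U y -> U (x - y).
Proof. by case=> _ _ H _ _; apply: H. Qed.
Lemma sfM (C : fieldType) (U : C -> Prop) x y : is_subfield U -> U x -> U y -> U (x * y).
Proof. by case=> _ _ _ H _; apply: H. Qed.
Lemma sfV (C : fieldType) (U : C -> Prop) x : is_subfield U -> U x -> U x^-1.
Proof. by case=> _ _ _ _ H; apply: H. Qed.
Lemma sfN (C : fieldType) (U : C -> Prop) x : is_subfield U -> U x -> U (- x).
Proof. by move=> HU Ux; rewrite -sub0r; apply: sfB => //; apply: sf0. Qed.
Lemma sfD (C : fieldType) (U : C -> Prop) x y : is_subfield U -> U x -> U y -> U (x + y).
Proof. by move=> HU Ux Uy; rewrite -[y]opprK; apply: sfB => //; apply: sfN. Qed.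
Lemma sfX (C : fieldType) (U : C -> Prop) x n : is_subfield U -> U x -> U (x ^+ n).
Proof.
move=> HU Ux; elim: n => [|n IH]; first by rewrite expr0; apply: sf1.
by rewrite exprS; apply: sfM.
Qed.
Lemma sfn (C : fieldType) (U : C -> Prop) n : is_subfield U -> U n%:R.
Proof.
move=> HU; elim: n => [|n IH]; first exact: sf0.
by rewrite -addn1 natrD; apply: sfD => //; apply: sf1.
Qed.

Lemma gen_sub (C : fieldType) (E : C -> Prop) a : is_subfield (gen_field E a).
Proof.
split.
- by move=> S HS _ _; apply: sf0.
- by move=> S HS _ _; apply: sf1.
- by move=> x y Hx Hy S HS HE Ha; apply: sfB => //; [apply: Hx | apply: Hy].
- by move=> x y Hx Hy S HS HE Ha; apply: sfM => //; [apply: Hx | apply: Hy].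
- by move=> x Hx S HS HE Ha; apply: sfV => //; apply: Hx.
Qed.

Lemma gen_E (C : fieldType) (E : C -> Prop) a y : E y -> gen_field E a y.
Proof. by move=> Ey S _ HE _; apply: HE. Qed.

Lemma gen_a (C : fieldType) (E : C -> Prop) a : gen_field E a a.
Proof. by move=> S _ _ Ha. Qed.

Lemma gen_min (C : fieldType) (E S : C -> Prop) a : is_subfield S ->
  (forall y, E y -> S y) -> S a -> forall x, gen_field E a x -> S x.
Proof. by move=> HS HE Ha x Hx; apply: Hx. Qed.

Definition inS (C : fieldType) (U : C -> Prop) N (xi : C) (x : C) :=
  exists c : 'I_N -> C, (forall i, U (c i)) /\ x = \sum_(i < N) c i * xi ^+ i.

Lemma S0 (C : fieldType) (U : C -> Prop) N xi : is_subfield U -> inS U N xi 0.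
Proof.
move=> HU; exists (fun _ => 0); split; first by move=> _; apply: sf0.
by rewrite big1 // => i _; rewrite mul0r.
Qed.

Lemma SD (C : fieldType) (U : C -> Prop) N xi x y : is_subfield U ->
  inS U N xi x -> inS U N xi y -> inS U N xi (x + y).
Proof.
move=> HU [c [Hc ->]] [c' [Hc' ->]]; exists (fun i => c i + c' i); split.
  by move=> i; apply: sfD.
by rewrite -big_split /=; apply: eq_bigr => i _; rewrite mulrDl.
Qed.

Lemma SZ (C : fieldType) (U : C -> Prop) N xi a x : is_subfield U -> U a ->
  inS U N xi x -> inS U N xi (a * x).
Proof.
move=> HU Ua [c [Hc ->]]; exists (fun i => a * c i); split.
  by move=> i; apply: sfM.
by rewrite mulr_sumr; apply: eq_bigr => i _; rewrite mulrA.
Qed.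

Lemma Ssum (C : fieldType) (U : C -> Prop) N xi (I : Type) (r : seq I) (F : I -> C) :
  is_subfield U -> (forall i, inS U N xi (F i)) -> inS U N xi (\sum_(i <- r) F i).
Proof.
move=> HU HF; elim: r => [|i r IH]; first by rewrite big_nil; apply: S0.
by rewrite big_cons; apply: SD.
Qed.

Lemma Spow (C : fieldType) (U : C -> Prop) N xi d : is_subfield U -> (0 < N)%N ->
  xi ^+ N = d -> U d -> forall n, inS U N xi (xi ^+ n).
Proof.
move=> HU N0 hd Ud n; elim/ltn_ind: n => n IH.
case: (ltnP n N) => hn.
  exists (fun i : 'I_N => if val i == n then 1 else 0); split.
    by move=> i; case: ifP => _; [apply: sf1 | apply: sf0].
  rewrite (bigD1 (Ordinal hn)) //= eqxx mul1r big1 ?addr0 // => i /negbTE.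
  rewrite -(inj_eq val_inj) /= => ->; by rewrite mul0r.
have -> : xi ^+ n = d * xi ^+ (n - N) by rewrite -hd -exprD subnKC.
apply: SZ => //; apply: IH.
by rewrite ltn_subrL N0 /=; apply: leq_trans N0 hn.
Qed.

Lemma SM (C : fieldType) (U : C -> Prop) N xi d x y : is_subfield U -> (0 < N)%N ->
  xi ^+ N = d -> U d -> inS U N xi x -> inS U N xi y -> inS U N xi (x * y).
Proof.
move=> HU N0 hd Ud [c [Hc ->]] [c' [Hc' ->]].
rewrite mulr_suml; apply: Ssum => // i; rewrite -mulrA; apply: SZ => //.
rewrite mulr_sumr; apply: Ssum => // j; rewrite mulrCA -exprD; apply: SZ => //.
exact: (Spow HU N0 hd Ud).
Qed.

Lemma SU (C : fieldType) (U : C -> Prop) N xi d a : is_subfield U -> (0 < N)%N ->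
  xi ^+ N = d -> U d -> U a -> inS U N xi a.
Proof.
move=> HU N0 hd Ud Ua; have := SZ HU Ua (Spow HU N0 hd Ud 0).
by rewrite expr0 mulr1.
Qed.

Lemma inv_rel (C : fieldType) (U : C -> Prop) N xi d s : is_subfield U -> (0 < N)%N ->
  xi ^+ N = d -> U d -> inS U N xi s -> s != 0 ->
  forall n (a : nat -> C), (forall j, U (a j)) -> (exists j, (j < n)%N /\ a j != 0) ->
  \sum_(j < n) a j * s ^+ j = 0 -> inS U N xi s^-1.
Proof.
move=> HU N0 hd Ud Ss sn0.
have powS : forall j, inS U N xi (s ^+ j).
  elim=> [|j IH]; first by rewrite expr0; apply: (SU HU N0 hd Ud); apply: sf1.
  by rewrite exprS; apply: (SM HU N0 hd Ud).
elim=> [|n IH] a Ua [j [hj aj]] E; first by [].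
rewrite big_ord_recl expr0 mulr1 in E.
have eT : \sum_(i < n) a (lift ord0 i) * s ^+ (lift ord0 i) =
          s * \sum_(i < n) a i.+1 * s ^+ i.
  by rewrite mulr_sumr; apply: eq_bigr => i _; rewrite lift0 exprS mulrCA.
rewrite eT in E.
set T := \sum_(i < n) a i.+1 * s ^+ i in E.
have [a0|a0] := eqVneq (a 0%N) 0.
  rewrite a0 add0r in E.
  have T0 : T = 0 by move/eqP: E; rewrite mulf_eq0 (negbTE sn0) => /eqP.
  apply: (IH (fun i => a i.+1)) => //.
  case: j hj aj => [|j] hj aj; first by rewrite a0 eqxx in aj.
  by exists j.
have -> : s^-1 = - (a 0%N)^-1 * T.
  apply: (mulfI sn0); rewrite mulfV // mulrCA.
  have -> : s * T = - a 0%N by apply/eqP; rewrite -addr_eq0 addrC E.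
  by rewrite mulNr mulrN opprK mulVf.
apply: SZ => //; first by apply: sfN => //; apply: sfV.
apply: Ssum => // i; apply: SZ => //.
Qed.

Lemma Sinv (C : fieldType) (U : C -> Prop) N xi d s : is_subfield U -> (0 < N)%N ->
  xi ^+ N = d -> U d -> inS U N xi s -> inS U N xi s^-1.
Proof.
move=> HU N0 hd Ud Ss.
have [->|sn0] := eqVneq s 0; first by rewrite invr0; apply: S0.
have powS : forall j, inS U N xi (s ^+ j).
  elim=> [|j IH]; first by rewrite expr0; apply: (SU HU N0 hd Ud); apply: sf1.
  by rewrite exprS; apply: (SM HU N0 hd Ud).
have [w Hw] := @boolp.choice _ _ (fun (k : 'I_N.+1) (c : 'I_N -> C) =>
   (forall i, U (c i)) /\ s ^+ k = \sum_(i < N) c i * xi ^+ i) (fun k => powS k).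
have [c [Uc [j0 cj0] Hc]] := dep_lemma HU (fun j k => (proj1 (Hw j)) k).
apply: (inv_rel HU N0 hd Ud Ss sn0 (n := N.+1) (a := fun j => c (inord j))).
- by move=> j.
- by exists j0; rewrite inord_val.
have -> : \sum_(j < N.+1) c (inord j) * s ^+ j = \sum_(j < N.+1) c j * s ^+ j.
  by apply: eq_bigr => j _; rewrite inord_val.
under eq_bigr => j _ do rewrite (proj2 (Hw j)) mulr_sumr.
rewrite exchange_big /=; apply: big1 => k _.
transitivity ((\sum_j c j * w j k) * xi ^+ k); last by rewrite Hc mul0r.
rewrite mulr_suml.
by apply: eq_bigr => j _; rewrite mulrA.
Qed.

Lemma sum_dist (R : realType) (C : fieldType) (absv : C -> R) (t : nat -> C) n :
  nonarch_absval absv ->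
  (forall i j, (i < n)%N -> (j < n)%N -> t i != 0 -> t j != 0 ->
     absv (t i) = absv (t j) -> i = j) ->
  (exists i, (i < n)%N /\ t i != 0) ->
  exists i, [/\ (i < n)%N, t i != 0 & absv (\sum_(k < n) t k) = absv (t i)].
Proof.
move=> Ha; elim: n => [|n IH] Hd [i [hi ti]]; first by [].
rewrite big_ord_recr /=.
have Hd' : forall a b, (a < n)%N -> (b < n)%N -> t a != 0 -> t b != 0 ->
     absv (t a) = absv (t b) -> a = b.
  by move=> a b ha hb; apply: Hd; apply: ltnW.
case: (boolP [exists k : 'I_n, t k != 0]) => [/existsP [k tk] | /existsPn Hall].
  have [i0 [hi0 ti0 E0]] := IH Hd' (ex_intro _ (val k) (conj (ltn_ord k) tk)).
  have [tn|tn] := eqVneq (t n) 0.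
    by exists i0; split => //; [apply: ltnW | rewrite tn addr0].
  case: (ltgtP (absv (t i0)) (absv (t n))) => h.
  - by exists n; split => //; rewrite av_ult // E0.
  - by exists i0; split => //; [apply: ltnW | rewrite addrC av_ult // E0].
  - by have := Hd i0 n (ltnW hi0) (ltnSn n) ti0 tn h => e; rewrite e ltnn in hi0.
have S0 : \sum_(k < n) t k = 0.
  by apply: big1 => k _; apply/eqP; move: (Hall k); rewrite negbK.
exists n; rewrite S0 add0r; split => //.
move: hi; rewrite ltnS leq_eqVlt => /orP [/eqP <- //| hin].
by move: (Hall (Ordinal hin)); rewrite /= ti.
Qed.

Lemma core_lemma (R : realType) (C : fieldType) (absv : C -> R) p (U : C -> Prop) N M (xi a : C) i j :
  [pchar C] =i pred0 -> nonarch_absval absv -> absv p%:R = (p%:R)^-1 -> prime p ->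
  is_subfield U -> ram_index absv (Qclosure absv) U 1 ->
  coprime N M -> absv xi ^+ N = ((p%:R : R)^-1) ^+ M ->
  (i < N)%N -> (j < N)%N -> U a -> a != 0 ->
  absv xi ^+ i = absv xi ^+ j * absv a -> i = j.
Proof.
move=> ch Ha Hp pp HU Hr cop hxN hi hj Ua an0 E.
have [k ek] := av_U ch Ha Hp pp HU Hr Ua an0.
set P := (p%:R : R) in hxN ek.
have P1 : 1 < P by rewrite /P ltr1n prime_gt1.
have P0 : 0 < P by apply: lt_trans P1.
have Pn0 : P != 0 by rewrite gt_eqF.
have := congr1 (fun r => r ^+ N) E.
rewrite exprMn -!exprM ![(_ * N)%N]mulnC !exprM hxN ek -!exprM.
rewrite !exprnP !exprz_inv exprz_exp -expfzDr // => /(ieexprIz P0 (negbT (gt_eqF P1))) e.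
have e2 : (M * j)%:Z - (M * i)%:Z = k * N.
  move: e; lia.
have dv : (N%:Z %| M%:Z * (j%:Z - i%:Z))%Z.
  by rewrite mulrBr -!PoszM e2; apply: dvdz_mull; exact: dvdzz.
rewrite Gauss_dvdzr in dv; last by rewrite coprimezE.
case/dvdzP: dv => q eq.
have [hq|[hq|hq]] : (q <= -1 \/ q = 0 \/ 1 <= q)%R by lia.
- have : (q * N%:Z <= - N%:Z)%R by nia. lia.
- by move: eq; rewrite hq mul0r; lia.
- have : (N%:Z <= q * N%:Z)%R by nia. lia.
Qed.

Lemma odd_eN (n : nat) : odd n -> n = (2 * (n.-1 %/ 2)).+1.
Proof.
case: n => // n /= on; rewrite mulnC divnK //.
by rewrite dvdn2.
Qed.

Lemma odd_eM (n : nat) : odd n -> (n + 1 = 2 * ((n + 1) %/ 2))%N.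
Proof. by move=> on; rewrite mulnC divnK // dvdn2 addn1 /= on. Qed.

Theorem theorem5p7 (R : realType) (C : closedFieldType) (absv : C -> R)
    (p h1 h2 : nat) (U : C -> Prop) (xi eta : C) :
  Qpbar_model absv p ->
  prime p -> odd p ->
  (0 < h1)%N -> (0 < h2)%N -> coprime h1 h2 -> h1 != 1%N -> h2 != 1%N ->
  odd (h1 + h2) ->
  (* U = U_h : the unramified extension of degree h of Q_p inside C *)
  is_subfield U -> (forall x, Qclosure absv x -> U x) ->
  unramified_of_degree absv (Qclosure absv) U (h1 + h2) ->
  (* (xi, eta) non-zero p-torsion point of D *)
  (xi, eta) != (0, 0) ->
  p%:R * xi + eta ^+ (p ^ h1) = 0 ->
  p%:R * eta + xi ^+ (p ^ h2) = 0 ->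
  (forall x, gen_field U xi x <-> gen_field U eta x) /\
  totally_ramified_of_degree absv U (gen_field U xi) ((p ^ (h1 + h2)).-1 %/ 2).
Proof.
move=> [ch Ha Hp _ _] pp op h1p h2p cop h1n h2n oh HU HQU [_ Hr] nz e1 e2.
have := Ha => -[H0 _ HM _].
have p1 : (1 < p)%N by apply: prime_gt1.
have pn0 : (p%:R : C) != 0 by have /pcharf0P -> := ch; rewrite -lt0n; lia.
have Up : U p%:R by apply: sfn.
have E1 : eta ^+ (p ^ h1) = - (p%:R * xi) by apply/eqP; rewrite -addr_eq0 addrC e1.
have E2 : xi ^+ (p ^ h2) = - (p%:R * eta) by apply/eqP; rewrite -addr_eq0 addrC e2.
have part1 : forall x, gen_field U xi x <-> gen_field U eta x.
  move=> x; split.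
    apply: (gen_min (gen_sub U eta) (@gen_E _ _ _)).
    have -> : xi = (p%:R)^-1 * - (eta ^+ (p ^ h1)) by rewrite E1 opprK mulKf.
    have G := gen_sub U eta.
    apply: (sfM G); first by apply: (sfV G); apply: gen_E.
    by apply: (sfN G); apply: (sfX _ G); apply: gen_a.
  apply: (gen_min (gen_sub U xi) (@gen_E _ _ _)).
  have -> : eta = (p%:R)^-1 * - (xi ^+ (p ^ h2)) by rewrite E2 opprK mulKf.
  have G := gen_sub U xi.
  apply: (sfM G); first by apply: (sfV G); apply: gen_E.
  by apply: (sfN G); apply: (sfX _ G); apply: gen_a.
split; first exact: part1.
have xin0 : xi != 0.
  apply/eqP => x0; move: nz; rewrite x0 in E2.
  rewrite expr0n expn_eq0 (negbTE (lt0n_neq0 (ltnW p1))) /= in E2.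
  have : eta = 0.
    by move/eqP: E2; rewrite eq_sym oppr_eq0 mulf_eq0 (negbTE pn0) => /eqP.
  by move=> ->; rewrite x0 eqxx.
set N := ((p ^ (h1 + h2)).-1 %/ 2)%N.
set M := ((p ^ h1 + 1) %/ 2)%N.
have oph : odd (p ^ (h1 + h2)) by rewrite oddX op orbT.
have oph1 : odd (p ^ h1) by rewrite oddX op orbT.
have eN := odd_eN oph; rewrite -/N in eN.
have eM := odd_eM oph1; rewrite -/M in eM.
have N0 : (0 < N)%N.
  have := ltn_expl (h1 + h2) p1; rewrite eN; lia.
have rel : xi ^+ (p ^ (h1 + h2)) = (- p%:R) ^+ (p ^ h1 + 1) * xi.
  rewrite expnD mulnC exprM E2 -mulNr exprMn E1 addn1 exprSr -mulNr.
  by rewrite !mulrA.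
have hxi2 : (xi ^+ N) ^+ 2 = ((- p%:R) ^+ M) ^+ 2.
  apply: (mulIf xin0); rewrite -!exprM -exprSr mulnC -eN rel eM.
  by rewrite mulnC.
set d := xi ^+ N.
have dE : d = (- p%:R) ^+ M \/ d = - ((- p%:R) ^+ M).
  move/eqP: hxi2; rewrite -subr_eq0 subr_sqr mulf_eq0 => /orP [|].
    by rewrite subr_eq0 => /eqP; left.
  by rewrite addr_eq0 => /eqP; right.
have Ud : U d.
  by case: dE => ->; [| apply: sfN => //]; apply: sfX => //; apply: sfN.
have absd : absv xi ^+ N = ((p%:R : R)^-1) ^+ M.
  rewrite -avX //; rewrite -/d.
  by case: dE => ->; rewrite ?avN // avX // avN // Hp.
have copNM : coprime N M by apply: arith_coprime.
set F := gen_field U xi.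
have HF : is_subfield F := gen_sub U xi.
have Fxi : F xi := @gen_a _ U xi.
have subS : is_subfield (inS U N xi).
  split.
  - exact: S0.
  - by apply: (SU HU N0 erefl Ud); apply: sf1.
  - move=> x y Sx Sy; apply: (SD HU Sx); rewrite -mulN1r.
    by apply: (SZ HU) => //; apply: sfN => //; apply: sf1.
  - by move=> x y; apply: (SM HU N0 erefl Ud).
  - by move=> x; apply: (Sinv HU N0 erefl Ud).
have FS : forall x, F x -> inS U N xi x.
  apply: (gen_min subS); first by move=> y; apply: (SU HU N0 erefl Ud).
  by have := Spow HU N0 erefl Ud 1; rewrite expr1.
have core : forall i j a, (i < N)%N -> (j < N)%N -> U a -> a != 0 ->
    absv xi ^+ i = absv xi ^+ j * absv a -> i = j.
  by move=> i j a; apply: (core_lemma ch Ha Hp pp HU Hr copNM absd).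
pose o0 : 'I_N := Ordinal N0.
have dist : forall c : 'I_N -> C, (forall i, U (c i)) ->
   forall i j, (i < N)%N -> (j < N)%N -> c (insubd o0 i) * xi ^+ i != 0 ->
   c (insubd o0 j) * xi ^+ j != 0 ->
   absv (c (insubd o0 i) * xi ^+ i) = absv (c (insubd o0 j) * xi ^+ j) -> i = j.
  move=> c Uc i j hi hj ti tj E.
  have ci : c (insubd o0 i) != 0 by apply: contraNneq ti => ->; rewrite mul0r.
  have cj : c (insubd o0 j) != 0 by apply: contraNneq tj => ->; rewrite mul0r.
  apply: (core i j (c (insubd o0 j) * (c (insubd o0 i))^-1)) => //.
  - by apply: sfM => //; apply: sfV.
  - by rewrite mulf_neq0 ?invr_neq0.
  - rewrite HM avV // -!avX //.
    have ai : absv (c (insubd o0 i)) != 0 by rewrite av_eq0.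
    move: E; rewrite !HM => E.
    by apply: (mulfI ai); rewrite E; field.
have sumE : forall c : 'I_N -> C,
    \sum_(i < N) c i * xi ^+ i = \sum_(k < N) c (insubd o0 k) * xi ^+ k.
  by move=> c; apply: eq_bigr => i _; rewrite valKd.
have tnz : forall c : 'I_N -> C, forall i : 'I_N, c i != 0 ->
    c (insubd o0 i) * xi ^+ i != 0.
  by move=> c i ci; rewrite valKd mulf_neq0 // expf_neq0.
split.
  exists (fun i : 'I_N => xi ^+ i); split.
  - by move=> i; apply: (sfX _ HF).
  - by move=> x /FS.
  - move=> c Uc s0 i; apply/eqP; apply/negPn/negP => ci.
    have [k [hk tk E]] := sum_dist Ha (dist c Uc) (ex_intro _ (val i) (conj (ltn_ord i) (tnz c i ci))).
    by move: E; rewrite -sumE s0 av0 // => /esym/eqP; rewrite av_eq0 // (negbTE tk).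
exists (fun i : 'I_N => xi ^+ i); split.
- by move=> i; split; [apply: (sfX _ HF) | apply: expf_neq0].
- move=> x Fx xn0; have [c [Uc ex]] := FS x Fx.
  have [i ci] : exists i, c i != 0.
    apply/existsP; apply: contraLR xn0; rewrite negb_exists => /forallP H.
    rewrite negbK ex big1 // => i _; move: (H i); rewrite negbK => /eqP ->.
    by rewrite mul0r.
  have [k [hk tk E]] := sum_dist Ha (dist c Uc) (ex_intro _ (val i) (conj (ltn_ord i) (tnz c i ci))).
  exists (Ordinal hk), (c (insubd o0 k)); split.
  + exact: Uc.
  + by apply: contraNneq tk => ->; rewrite mul0r.
  + rewrite ex sumE E HM mulrC; congr (_ * _); congr (absv (_ ^+ _)).
- move=> i j a Ua an0; rewrite !avX // => E.
  by apply: val_inj; apply: (core i j a).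
Qed.
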